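(* Let $\varphi\in\mathrm{THT}(\mathsf X,\mathsf U)$ and let $M=(T,T)$ be an equilibrium model of $\varphi$. Then $M$ is almost-empty, i.e. $T(i)\neq\emptyset$ for only finitely many $i$.
   Context: Fix a finite set $P$ of atomic propositions. THT formulas over $P$: $\varphi ::= p \mid \bot \mid \varphi\vee\varphi \mid \varphi\wedge\varphi \mid \varphi\rightarrow\varphi \mid \mathsf{X}\varphi \mid \varphi\,\mathsf{U}\,\varphi \mid \varphi\,\mathsf{R}\,\varphi$, with $\neg\varphi:=\varphi\rightarrow\bot$ and $\top:=\neg\bot$. A THT interpretation is a pair $M=(H,T)$ of infinite words over $2^P$ with $H(i)\subseteq T(i)$ for all $i$; it is total if $H=T$. Satisfaction $M,i\models\varphi$ is defined by: - $M,i\not\models\bot$; - $M,i\models p$ iff $p\in H(i)$; - $\vee$ and $\wedge$ are interpreted as usual; - $M,i\models\varphi\rightarrow\psi$ iff for both $H'\in\{H,T\}$, either $(H',T),i\not\models\varphi$ or $(H',T),i\models\psi$; - $M,i\models\mathsf X\varphi$ iff $M,i+1\models\varphi$; - $M,i\models\varphi\mathsf U\psi$ iff some $j\ge i$ has $M,j\models\psi$ and $M,k\models\varphi$ for all $i\le k<j$. $M\models\varphi$ means $M,0\models\varphi$. An equilibrium model of $\varphi$ is a total $(T,T)\models\varphi$ with $(H,T)\not\models\varphi$ whenever $H(i)\subseteq T(i)$ for all $i$ and $H\ne T$. $\mathrm{THT}(\mathsf X,\mathsf U)$ is the set of THT formulas whose only temporal modalities are $\mathsf X$ and $\mathsf U$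 (no bounds on nesting). A total interpretation is almost-empty if it has only finitely many positions $i$ with $T(i)\ne\emptyset$. *)

(* Defs.v *)
From Stdlib Require Import List.

Set Implicit Arguments.

Inductive formula (P : Type) : Type :=
| Atom : P -> formula P
| Bot : formula P
| Or : formula P -> formula P -> formula P
| And : formula P -> formula P -> formula P
| Impl : formula P -> formula P -> formula P
| Next : formula P -> formula P
| Until : formula P -> formula P -> formula P
| Release : formula P -> formula P -> formula P.

Arguments Bot {P}.

Definition Neg {P} (f : formula P) : formula P := Impl f Bot.
Definition Top {P} : formula P := Neg Bot.

(* Infinite words over 2^P: position i, set of atoms true there *)
Definition trace (P : Type) := nat -> P -> Prop.

Definition sub_trace {P} (H T : trace P) : Prop :=
  forall i (p : P), H i p -> T i p.

(* Satisfaction (H,T), i |= phi.  Requires H to be pointwise included in T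
   for it to be a THT interpretation, which is imposed where used. *)
Fixpoint sat {P} (H T : trace P) (i : nat) (f : formula P) : Prop :=
  match f with
  | Atom p => H i p
  | Bot => False
  | Or a b => sat H T i a \/ sat H T i b
  | And a b => sat H T i a /\ sat H T i b
  | Impl a b =>
      (~ sat H T i a \/ sat H T i b) /\ (~ sat T T i a \/ sat T T i b)
  | Next a => sat H T (S i) a
  | Until a b =>
      exists j, i <= j /\ sat H T j b /\ (forall k, i <= k -> k < j -> sat H T k a)
  | Release a b =>
      forall j, i <= j -> sat H T j b \/ (exists k, i <= k /\ k < j /\ sat H T k a)
  end.

Fixpoint in_XU {P} (f : formula P) : Prop :=
  match f with
  | Atom _ | Bot => True
  | Or a b | And a b | Impl a b | Until a b => in_XU a /\ in_XU b
  | Next a => in_XU a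
  | Release _ _ => False
  end.

(* Equilibrium model (T,T) of phi.  Since H(i) subset T(i), H <> T as words
   of sets means some atom is in T(i) but not H(i). *)
Definition equilibrium_model {P} (f : formula P) (T : trace P) : Prop :=
  sat T T 0 f /\
  forall H : trace P, sub_trace H T ->
    (exists i (p : P), T i p /\ ~ H i p) -> ~ sat H T 0 f.

Definition almost_empty {P} (T : trace P) : Prop :=
  exists n, forall i, n <= i -> forall p : P, ~ T i p.

Definition finite_atoms (P : Type) : Prop := exists l : list P, forall p, In p l.

(* Main.v *)
Require Import Defs.
From Stdlib Require Import Arith Lia.

Lemma persist {P} (H T : trace P) (f : formula P) :
  sub_trace H T -> forall i, sat H T i f -> sat T T i f.
Proof.
  intros HT; induction f; simpl; intros i Hs; auto.
  - destruct Hs; [left|right]; auto.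
  - destruct Hs; split; auto.
  - destruct Hs; split; auto.
  - destruct Hs as [j [? [? Hk]]]; exists j; repeat split; auto.
  - intros j Hj; destruct (Hs j Hj) as [?|[k [? [? ?]]]]; [left; auto|right; exists k; auto].
Qed.

Definition trunc {P} (T : trace P) (n : nat) : trace P := fun i p => i < n /\ T i p.

Lemma fin_max (Q : nat -> nat -> Prop) (m : nat) :
  (forall k, k < m -> exists N, forall n, N <= n -> Q k n) ->
  exists N, forall k, k < m -> forall n, N <= n -> Q k n.
Proof.
  induction m; intros Hq.
  - exists 0; intros; lia.
  - destruct IHm as [N1 HN1]. { intros; apply Hq; lia. }
    destruct (Hq m ltac:(lia)) as [N2 HN2].
    exists (N1 + N2); intros k Hk n Hn.
    destruct (Nat.eq_dec k m); [subst; apply HN2; lia | apply HN1; lia].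
Qed.

Lemma key {P} (T : trace P) (f : formula P) : in_XU f ->
  forall i, sat T T i f -> exists N, forall n, N <= n -> sat (trunc T n) T i f.
Proof.
  induction f; simpl; intros Hx i Hs.
  - exists (S i); intros n Hn; split; auto; lia.
  - contradiction.
  - destruct Hx as [Ha Hb]; destruct Hs as [Hs|Hs].
    + destruct (IHf1 Ha i Hs) as [N HN]; exists N; intros; left; auto.
    + destruct (IHf2 Hb i Hs) as [N HN]; exists N; intros; right; auto.
  - destruct Hx as [Ha Hb]; destruct Hs as [Hs1 Hs2].
    destruct (IHf1 Ha i Hs1) as [N1 HN1]; destruct (IHf2 Hb i Hs2) as [N2 HN2].
    exists (N1 + N2); intros; split; [apply HN1|apply HN2]; lia.
  - destruct Hx as [Ha Hb]; destruct Hs as [Hs1 Hs2].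
    destruct Hs1 as [Hn|Hy].
    + exists 0; intros n _; split; auto; left; intro Hc; apply Hn.
      apply (@persist _ (trunc T n)); auto. intros ? ? [? ?]; auto.
    + destruct (IHf2 Hb i Hy) as [N HN]; exists N; intros; split; auto.
  - destruct (IHf Hx (S i) Hs) as [N HN]; exists N; auto.
  - destruct Hx as [Ha Hb]; destruct Hs as [j [Hij [Hj Hk]]].
    destruct (IHf2 Hb j Hj) as [N2 HN2].
    destruct (fin_max (fun k n => sat (trunc T n) T (i + k) f1) (j - i)) as [N1 HN1].
    { intros k Hk0; apply IHf1; auto; apply Hk; lia. }
    exists (N1 + N2); intros n Hn; exists j; repeat split; auto.
    + apply HN2; lia.
    + intros k Hk1 Hk2. replace k with (i + (k - i)) by lia. apply HN1; lia.
  - contradiction.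
Qed.

Theorem mainTheorem13 (P : Type) (HP : finite_atoms P)
  (phi : formula P) (T : trace P) :
  in_XU phi -> equilibrium_model phi T -> almost_empty T.
Proof.
  intros Hx [Hs Hmin].
  destruct (key T phi Hx 0 Hs) as [N HN].
  exists N; intros i Hi p Hp.
  apply (Hmin (trunc T N)).
  - intros ? ? [? ?]; auto.
  - exists i, p; split; auto; intros [? ?]; lia.
  - apply HN; lia.
Qed.
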